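(* Let $u$ be a one-sided Sturmian sequence with left special sequence $l=l_1l_2\dots$, and let $n>1$ and $x\in\{0,1\}$ be such that $xL_{n-1}=xl_1l_2\dots l_{n-1}$ is a significant block of $\tilde X_u$. Then the HB diagram of $X_u^+$ contains the arrow $xl_1l_2\dots l_{n-1}\to xl_1l_2\dots l_n$.
   Context: A sequence $u\in\{0,1\}^{\mathbb N}$ is Sturmian if for every $n\ge1$ exactly $n+1$ distinct blocks of length $n$ occur in $u$. $X_u^+$ is the closure of $\{\sigma^n u:n\in\mathbb N\}$, $\sigma$ the shift $(\sigma x)_i=x_{i+1}$, and $\tilde X_u=\{x\in\{0,1\}^{\mathbb Z}: x_px_{p+1}\dots\in X_u^+\ \forall p\}$; the languages of $u$, $X_u^+$, $\tilde X_u$ coincide. For each $n$ there is a unique block $L_n$ of length $n$ with $0L_n$ and $1L_n$ in the language; these are the prefixes $L_n=l_1\dots l_n$ of the left special sequence $l$. For a block $a_{-n}\dots a_0$ in the language, $\mathrm{fol}(a_{-n}\dots a_0)=\{b_0b_1\dots\in X_u^+:\exists b\in\tilde X_u,\ b_{-n}\dots b_0=a_{-n}\dots a_0\}$. A block $a_{-n}\dots a_0$ ($n\ge1$) is significant if $\mathrm{fol}(a_{-n}\dots a_0)\subsetneq\mathrm{fol}(a_{-n+1}\dots a_0)$; $0$ and $1$ are also significant. $\mathrm{sig}(\cdot)$ is the longest significant suffix. The HB diagram has vertex set the significant blocks and an arrow $\alpha\to\beta$ iff there is a symbol $b$ with $\alpha b$ in the language and $\beta=\mathrm{sig}(\alpha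 b)$. *)

(* Defs.v *)
(* Sequences u : nat -> bool (one-sided), x : int -> bool (two-sided).
   Symbols 0,1 are encoded as false,true. Blocks are seq bool. *)
From mathcomp Require Import all_boot all_order all_algebra.
Set Implicit Arguments. Unset Strict Implicit. Unset Printing Implicit Defensive.

Definition in_lang (u : nat -> bool) (w : seq bool) : Prop :=
  exists i : nat, forall k : nat, k < size w -> u (i + k) = nth false w k.

Definition sturmian (u : nat -> bool) : Prop :=
  forall n : nat, 0 < n ->
    exists s : seq (seq bool), [/\ uniq s, size s = n.+1 &
      forall w, w \in s <-> (size w = n /\ in_lang u w)].

(* X_u^+ : closure of the orbit {sigma^k u} in {0,1}^N (product topology,
   unfolded via cylinder neighbourhoods) *)
Definition in_Xplus (u : nat -> bool) (y : nat -> bool) : Prop :=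
  forall n : nat, exists k : nat, forall i : nat, i < n -> u (k + i) = y i.

Definition in_Xtilde (u : nat -> bool) (x : int -> bool) : Prop :=
  forall p : int, in_Xplus u (fun i : nat => x (p + (Posz i))%R).

(* fol(a_{-n} ... a_0), with a = [:: a_{-n}; ...; a_0] (so n = size a - 1) *)
Definition fol (u : nat -> bool) (a : seq bool) (y : nat -> bool) : Prop :=
  in_Xplus u y /\
  exists b : int -> bool, [/\ in_Xtilde u b,
    (forall i : nat, b (Posz i) = y i) &
    (forall k : nat, k < size a ->
       b (Posz k - Posz (size a).-1)%R = nth false a k)].

Definition significant (u : nat -> bool) (a : seq bool) : Prop :=
  in_lang u a /\
  (size a = 1 \/
   (2 <= size a /\
    (forall y, fol u a y -> fol u (behead a) y) /\
    exists y, fol u (behead a) y /\ ~ fol u a y)).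

Definition is_sig (u : nat -> bool) (w s : seq bool) : Prop :=
  [/\ (exists k, k < size w /\ s = drop k w), significant u s &
      forall k, k < size w -> significant u (drop k w) -> size (drop k w) <= size s].

Definition HB_arrow (u : nat -> bool) (alpha beta : seq bool) : Prop :=
  significant u alpha /\ significant u beta /\
  exists c : bool, in_lang u (rcons alpha c) /\ is_sig u (rcons alpha c) beta.

(* L_n = l_1 ... l_n, where l_j is encoded as l (j-1) *)
Definition Lpref (l : nat -> bool) (n : nat) : seq bool := mkseq l n.

Definition left_special_seq (u : nat -> bool) (l : nat -> bool) : Prop :=
  forall n : nat, in_lang u (false :: Lpref l n) /\ in_lang u (true :: Lpref l n).

(* Main.v *)
Require Import Defs.
From Stdlib Require Import Classical ClassicalDescription IndefiniteDescription.
From mathcomp Require Import all_boot all_order all_algebra zify.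
Set Implicit Arguments. Unset Strict Implicit. Unset Printing Implicit Defensive.

Definition pb (P : Prop) : bool := if excluded_middle_informative P then true else false.
Lemma pbP (P : Prop) : reflect P (pb P).
Proof. rewrite /pb; case: excluded_middle_informative => h; by constructor. Qed.

Definition occ (u : nat -> bool) (w : seq bool) i :=
  forall k, k < size w -> u (i + k) = nth false w k.
Definition win (f : nat -> bool) i m := mkseq (fun k => f (i + k)) m.

Lemma occ_win u i m : occ u (win u i m) i.
Proof. move=> k; rewrite size_mkseq => hk; by rewrite nth_mkseq. Qed.

Lemma lang_win u i m : in_lang u (win u i m).
Proof. exists i; exact: occ_win. Qed.

Lemma occ_eq u w i : occ u w i -> w = win u i (size w).
Proof.
move=> h; apply: (eq_from_nth (x0 := false)); first by rewrite size_mkseq.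
by move=> k hk; rewrite nth_mkseq // h.
Qed.

Definition evper (v : nat -> bool) := exists i p, 0 < p /\ forall t, v (i + t) = v (i + p + t).

Lemma sturm_not_evper u : sturmian u -> ~ evper u.
Proof.
move=> hs [i [p [hp hper]]].
have sh : forall j, i <= j -> u j = u (j + p).
  move=> j hj; have := hper (j - i).
  have -> : i + (j - i) = j by lia.
  by have -> : i + p + (j - i) = j + p by lia.
have [s [us ss hmem]] := hs (i + p) ltac:(lia).
have sub : {subset s <= map (fun j => win u j (i + p)) (iota 0 (i + p))}.
  move=> w /hmem [sw [j hj]].
  elim/ltn_ind: j hj => j IH hj.
  case: (ltnP j (i + p)) => hjl.
    apply/mapP; exists j; first by rewrite mem_iota.
    by rewrite -sw; exact: occ_eq.
  apply: (IH (j - p)); first by lia.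
  move=> k hk; rewrite -hj //; rewrite sh; last by lia.
  congr u; lia.
have := uniq_leq_size us sub; rewrite size_map size_iota ss; lia.
Qed.

Fixpoint allw m : seq (seq bool) :=
  if m is m'.+1 then map (cons false) (allw m') ++ map (cons true) (allw m') else [:: [::]].

Lemma mem_allw m w : size w = m -> w \in allw m.
Proof.
elim: m w => [|m IH] [|b w] //= [hs].
by rewrite mem_cat; case: b; rewrite ?map_f ?orbT ?IH.
Qed.

Definition langl v m := undup (filter (fun w => pb (in_lang v w)) (allw m)).

Lemma langl_uniq v m : uniq (langl v m).
Proof. exact: undup_uniq. Qed.

Lemma mem_langl v m w : size w = m -> in_lang v w -> w \in langl v m.
Proof. move=> hs hl; rewrite mem_undup mem_filter mem_allw // andbT; exact/pbP. Qed.

Lemma langl_mem v m w : w \in langl v m -> in_lang v w.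
Proof. by rewrite mem_undup mem_filter => /andP [/pbP]. Qed.

Lemma size_allw_mem m w : w \in allw m -> size w = m.
Proof.
elim: m w => [|m IH] w /=; first by rewrite inE => /eqP ->.
by rewrite mem_cat => /orP [] /mapP [w' /IH h ->] /=; rewrite h.
Qed.

Lemma langl_size v m w : w \in langl v m -> size w = m.
Proof. by rewrite mem_undup mem_filter => /andP [_ /size_allw_mem]. Qed.

Lemma right_ext v w : in_lang v w -> exists b, in_lang v (rcons w b).
Proof.
move=> [i hi]; exists (v (i + size w)); exists i => k.
rewrite size_rcons ltnS leq_eqVlt => /orP [/eqP -> | hk].
  by rewrite nth_rcons ltnn eqxx.
by rewrite nth_rcons hk hi.
Qed.

Lemma no_rs_evper v m :
  (forall w, size w = m -> ~ (in_lang v (rcons w false) /\ in_lang v (rcons w true))) ->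
  evper v.
Proof.
move=> hnrs.
have det : forall i j, win v i m = win v j m -> v (i + m) = v (j + m).
  move=> i j he; apply/eqP; apply/negPn/negP => hne.
  have hi : in_lang v (rcons (win v i m) (v (i + m))) by have := lang_win v i m.+1; rewrite /win mkseqS.
  have hj : in_lang v (rcons (win v i m) (v (j + m))) by have := lang_win v j m.+1; rewrite he /win mkseqS.
  apply: (hnrs (win v i m)); first by rewrite size_mkseq.
  move: hne hi hj; case: (v (i + m)); case: (v (j + m)) => //= _ ? ?; by split.
set N := size (allw m).
set L := map (fun j => win v j m) (seq.iota 0 N.+1).
have nu : ~~ uniq L.
  apply/negP => hu.
  have : size L <= N.
    apply: uniq_leq_size => // w /mapP [j _ ->]; apply: mem_allw; exact: size_mkseq.
  by rewrite size_map size_iota ltnn.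
have [i [j [hij hj he]]] := uniqPn [::] nu.
move: hj he; rewrite size_map size_iota => hj.
rewrite !(nth_map 0) ?size_iota ?nth_iota //; try lia.
rewrite !add0n => he.
have all : forall t, v (i + t) = v (j + t).
  elim/ltn_ind => t IH.
  case: (ltnP t m) => htm.
    have := congr1 (fun s => nth false s t) he; rewrite !nth_mkseq //.
  have := det (i + (t - m)) (j + (t - m)).
  have -> : i + (t - m) + m = i + t by lia.
  have -> : j + (t - m) + m = j + t by lia.
  apply; apply: (eq_from_nth (x0 := false)); rewrite !size_mkseq // => k hk.
  rewrite !nth_mkseq // -!addnA; apply: IH; lia.
exists i, (j - i); split; first by lia.
move=> t; rewrite all; congr v; lia.
Qed.

Lemma MH v : ~ evper v -> forall m, m.+1 <= size (langl v m).
Proof.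
move=> nep; elim=> [|m IH].
  apply: (uniq_leq_size (s1 := [:: [::]])) => // w; rewrite inE => /eqP ->.
  apply: mem_langl => //; by exists 0.
have [w0 [sw0 [h0 h1]]] : exists w, size w = m /\ in_lang v (rcons w false) /\ in_lang v (rcons w true).
  apply: NNPP => hn; apply: nep; apply: (no_rs_evper (m := m)) => w sw [a b].
  by apply: hn; exists w.
pose ext w := pb (in_lang v (rcons w true)).
have extP : forall w, in_lang v w -> in_lang v (rcons w (ext w)).
  move=> w /right_ext [b hb]; rewrite /ext; case: pbP => // hn.
  by case: b hb.
pose E := map (fun w => rcons w (ext w)) (langl v m) ++ [:: rcons w0 (~~ ext w0)].
have uE : uniq E.
  rewrite cat_uniq map_inj_uniq ?langl_uniq /=; last first.
    by move=> a b /rcons_inj [].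
  rewrite andbT orbF; apply/mapP => [[w _ /rcons_inj [-> h]]].
  by move: h; case: (ext w).
have sE : {subset E <= langl v m.+1}.
  move=> w; rewrite mem_cat => /orP [/mapP [w' hw' ->] | ].
    apply: mem_langl; first by rewrite size_rcons (langl_size hw').
    apply: extP; exact: langl_mem hw'.
  rewrite inE => /eqP ->; apply: mem_langl; first by rewrite size_rcons sw0.
  rewrite /ext; case: pbP => //.
have := uniq_leq_size uE sE; rewrite size_cat size_map /= addn1; exact: leq_trans.
Qed.

Lemma rec1 u w : sturmian u -> in_lang u w -> exists i, 0 < i /\ occ u w i.
Proof.
move=> hs hw; apply: NNPP => hn.
have hn' : forall i, occ u w i -> i = 0.
  move=> i hi; case: i hi => // i hi; exfalso; apply: hn; by exists i.+1.
case: (posnP (size w)) => hk.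
  by apply: hn; exists 1; split => // k; rewrite hk.
have [i0 hi0] := hw.
have e0 := hn' _ hi0; subst i0.
pose v t := u t.+1.
have nev : ~ evper v.
  rewrite /evper => -[i [p [hp hv]]]; apply: (sturm_not_evper hs); exists i.+1, p; split => // t.
have := MH nev (size w).
have [s [us ss hmem]] := hs (size w) hk.
have sub : {subset langl v (size w) <= rem w s}.
  move=> w' hw'; rewrite (mem_rem_uniq _ us) inE; apply/andP; split.
    apply/negP => /eqP e; subst w'.
    have [j hj] := langl_mem hw'.
    by have := hn' j.+1 (fun k hk' => hj k hk').
  apply/hmem; split; first exact: langl_size hw'.
  have [j hj] := langl_mem hw'; by exists j.+1 => k hk'; rewrite -hj.
have := uniq_leq_size (langl_uniq v (size w)) sub.
rewrite size_rem ?ss; last by apply/hmem.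
move=> h1 h2; have := leq_trans h2 h1; by rewrite ltnn.
Qed.

Lemma recN u w N : sturmian u -> in_lang u w -> exists i, N <= i /\ occ u w i.
Proof.
move=> hs hw; elim: N => [|N [i [hi oi]]].
  by have [i hi] := hw; exists i.
have [j [hj oj]] := rec1 (w := win u 0 (i + size w)) hs (lang_win u 0 _).
exists (j + i); split; first by lia.
move=> k hk; rewrite -addnA oj ?size_mkseq; last by lia.
by rewrite nth_mkseq ?add0n ?oi //; lia.
Qed.

Lemma left_ext u w : sturmian u -> in_lang u w -> exists b, in_lang u (b :: w).
Proof.
move=> hs hw; have [i [hi oi]] := rec1 hs hw.
exists (u i.-1); exists i.-1 => -[|k] /= hk; first by rewrite addn0.
by rewrite -oi //; congr u; lia.
Qed.

Lemma LS_uniq u W1 W2 : sturmian u -> size W1 = size W2 ->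
  (forall b, in_lang u (b :: W1)) -> (forall b, in_lang u (b :: W2)) -> W1 = W2.
Proof.
move=> hs hsz h1 h2; apply: NNPP => hne.
case: (posnP (size W1)) => hm.
  have e1 : W1 = [::] by apply/eqP; rewrite -size_eq0 hm.
  have e2 : W2 = [::] by apply/eqP; rewrite -size_eq0 -hsz hm.
  by apply: hne; rewrite e1 e2.
have [s [us ss hmem]] := hs (size W1) hm.
have [s' [us' ss' hmem']] := hs (size W1).+1 isT.
pose ext V := pb (in_lang u (true :: V)).
have extP : forall V, in_lang u V -> in_lang u (ext V :: V).
  move=> V /(left_ext hs) [b hb]; rewrite /ext; case: pbP => // hn; by case: b hb.
pose E := map (fun V => ext V :: V) s ++ [:: (~~ ext W1) :: W1; (~~ ext W2) :: W2].
have uE : uniq E.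
  rewrite cat_uniq map_inj_uniq ?us /=; last by move=> a b [].
  rewrite !inE andbT orbF; apply/andP; split.
    apply/negP => /orP [] /mapP [V _ [h e]]; subst V; by move: h; case: (ext _).
  apply/negP => /eqP [_ e]; exact: hne.
have sE : {subset E <= s'}.
  move=> w; rewrite mem_cat => /orP [/mapP [V hV ->] | ].
    have [sV lV] := (proj1 (hmem V) hV).
    by apply/hmem'; split; [rewrite /= sV | apply: extP].
  rewrite !inE => /orP [] /eqP ->; apply/hmem'; split => //=; rewrite ?hsz //.
have := uniq_leq_size uE sE; rewrite size_cat size_map ss ss' /=; lia.
Qed.

Definition occpos u w : nat :=
  match excluded_middle_informative (exists i, 0 < i /\ occ u w i) with
  | left H => proj1_sig (constructive_indefinite_description _ H)
  | right _ => 1 end.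

Lemma occposP u w : sturmian u -> in_lang u w -> 0 < occpos u w /\ occ u w (occpos u w).
Proof.
move=> hs hw; rewrite /occpos; case: excluded_middle_informative => H.
  by case: constructive_indefinite_description.
by exfalso; apply: H; exact: rec1.
Qed.

Definition step u w := win u (occpos u w).-1 (size w).+2.

Lemma step_size u w : size (step u w) = (size w).+2.
Proof. exact: size_mkseq. Qed.

Lemma step_mid u w : sturmian u -> in_lang u w ->
  forall k, k < size w -> nth false (step u w) k.+1 = nth false w k.
Proof.
move=> hs hw k hk; have [h0 h1] := occposP hs hw.
rewrite nth_mkseq; last by lia.
by rewrite -h1 //; congr u; lia.
Qed.

Definition WW u w K := iter K (step u) w.

Lemma WW_size u w K : size (WW u w K) = size w + 2 * K.
Proof.
elim: K => [|K IH]; first by rewrite /WW /=; lia.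
have -> : WW u w K.+1 = step u (WW u w K) by [].
rewrite step_size IH; lia.
Qed.

Lemma WWS u w K : WW u w K.+1 = step u (WW u w K).
Proof. by []. Qed.

Lemma WW_lang u w K : in_lang u w -> in_lang u (WW u w K).
Proof. case: K => // K _; exact: lang_win. Qed.

Lemma WW_cons u w K j : sturmian u -> in_lang u w -> j < size (WW u w K) ->
  nth false (WW u w K.+1) j.+1 = nth false (WW u w K) j.
Proof. move=> hs hw hj; rewrite WWS step_mid //; exact: WW_lang. Qed.

Lemma WW_mid u w K j : sturmian u -> in_lang u w -> j < size w ->
  nth false (WW u w K) (j + K) = nth false w j.
Proof.
move=> hs hw hj; elim: K => [|K IH]; first by rewrite addn0.
rewrite addnS WW_cons // WW_size; lia.
Qed.

Definition BB u w (z : int) := nth false (WW u w (absz z)) (absz (z + Posz (absz z))%R).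

Lemma BB_K u w z K : sturmian u -> in_lang u w -> 0 < size w -> absz z <= K ->
  BB u w z = nth false (WW u w K) (absz (z + Posz K)%R).
Proof.
move=> hs hw hpos hK.
have -> : K = absz z + (K - absz z) by lia.
elim: (K - absz z) => [|d IH]; first by rewrite addn0.
rewrite IH addnS.
have -> : absz (z + Posz (absz z + d).+1)%R = (absz (z + Posz (absz z + d))%R).+1 by lia.
rewrite WW_cons // WW_size; lia.
Qed.

Lemma ext2 u w : sturmian u -> in_lang u w -> 0 < size w ->
  exists B, in_Xtilde u B /\ forall k, k < size w -> B (Posz k) = nth false w k.
Proof.
move=> hs hw hpos; exists (BB u w); split.
  move=> p m.
  have [q hq] := WW_lang (absz p + m) hw.
  exists (q + absz (p + Posz (absz p + m))%R) => i hi.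
  rewrite (BB_K (K := absz p + m)) //; last by lia.
  rewrite -addnA hq; last by rewrite WW_size; lia.
  congr nth; lia.
move=> k hk; rewrite (BB_K (K := k)) //.
have -> : absz (Posz k + Posz k)%R = k + k by lia.
exact: WW_mid.
Qed.

Lemma ls_any u l : left_special_seq u l -> forall b m, in_lang u (b :: Lpref l m).
Proof. by move=> h [] m; case: (h m). Qed.

Lemma fol_behead u a y : fol u a y -> fol u (behead a) y.
Proof.
move=> [hy [b [hb hby hpre]]]; split => //; exists b; split => //.
case: a hpre => //= h t hpre k hk.
have := hpre k.+1 hk; rewrite /=.
by have -> : (Posz k.+1 - Posz (size t))%R = (Posz k - Posz (size t).-1)%R by lia.
Qed.

Lemma lang_Xt u B p m : in_Xtilde u B -> in_lang u (mkseq (fun t => B (p + Posz t)%R) m).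
Proof.
move=> hB; have [k hk] := hB p m; exists k => i; rewrite size_mkseq => hi.
by rewrite nth_mkseq // hk.
Qed.

Lemma Xt_shift u B q : in_Xtilde u B -> in_Xtilde u (fun z => B (z + q)%R).
Proof.
move=> hB p m; have [k hk] := hB (p + q)%R m; exists k => i hi.
by rewrite hk //; congr B; lia.
Qed.

Lemma cont u l x n : sturmian u -> left_special_seq u l ->
  exists V, in_lang u (~~ x :: Lpref l n ++ V) /\ Lpref l n ++ V <> Lpref l (n + size V).
Proof.
move=> hs hl; apply: NNPP => hn.
have H : forall V, in_lang u (~~ x :: Lpref l n ++ V) -> Lpref l n ++ V = Lpref l (n + size V).
  by move=> V hV; apply: NNPP => hne; apply: hn; exists V.
have G : forall i, occ u (~~ x :: Lpref l n) i -> forall s, u (i.+1 + s) = l s.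
  move=> i hi s.
  pose Wd := win u i.+1 (n + s.+1).
  have hWd : in_lang u (~~ x :: Wd).
    exists i => -[|k] /=; rewrite size_mkseq => hk.
      by have := hi 0 isT.
    by rewrite nth_mkseq // addnS.
  have ht : take n Wd = Lpref l n.
    have hlt : n < n + s.+1 by lia.
    apply: (eq_from_nth (x0 := false)); rewrite size_take /Wd /win /Lpref !size_mkseq hlt //.
    move=> k hk; rewrite nth_take // !nth_mkseq //; last by lia.
    have := hi k.+1; rewrite /= /Lpref size_mkseq nth_mkseq // addnS; apply; lia.
  have e := H (drop n Wd); rewrite -ht cat_take_drop in e.
  have := e hWd; rewrite size_drop size_mkseq => e2.
  have := congr1 (fun q => nth false q s) e2; rewrite !nth_mkseq //; lia.
have [i [_ oi]] := recN 0 hs (ls_any hl (~~ x) n).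
have [j [hj oj]] := recN i.+1 hs (ls_any hl (~~ x) n).
apply: (sturm_not_evper hs); exists i.+1, (j - i); split; first by lia.
move=> t; rewrite G //.
have -> : i.+1 + (j - i) + t = j.+1 + t by lia.
by rewrite G.
Qed.

Lemma size_L l n : size (Lpref l n) = n.
Proof. exact: size_mkseq. Qed.

Definition wm (B : int -> bool) n t := mkseq (fun s => B (Posz s.+1 - Posz n)%R) t.
Arguments wm : simpl never.

Lemma sig_xL u l x n : sturmian u -> left_special_seq u l -> 0 < n ->
  significant u (x :: Lpref l n).
Proof.
move=> hs hl hn; split; first exact: ls_any.
right; split; first by rewrite /= size_L.
split; first by move=> y /fol_behead.
have [V [hVl hV]] := cont x n hs hl.
set X := ~~ x :: Lpref l n ++ V.
have [B [hB hBX]] := ext2 hs hVl isT.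
pose B' z := B (z + Posz n)%R.
have hB' : in_Xtilde u B' := Xt_shift (Posz n) hB.
have hBk : forall k, k < n + size V -> B' (Posz k.+1 - Posz n)%R = nth false (Lpref l n ++ V) k.
  move=> k hk; rewrite /B' (_ : (Posz k.+1 - Posz n + Posz n)%R = Posz k.+1); last by lia.
  by rewrite hBX //= size_cat size_L.
exists (fun i => B' (Posz i)); split.
  split.
    move=> m; have [k hk] := hB' 0%R m; exists k => i hi; by rewrite hk // add0r.
  exists B'; split => // k; rewrite /= size_L => hk.
  rewrite (_ : (Posz k - Posz n.-1)%R = (Posz k.+1 - Posz n)%R); last by lia.
  by rewrite hBk ?nth_cat ?size_L ?hk //; lia.
move=> [_ [B2 [hB2 hy hpre]]].
have claim : forall t, B' (Posz t.+1 - Posz n)%R = l t.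
  move=> t; pose Wm := wm B' n t.+1.
  have hall : forall b, in_lang u (b :: Wm).
    move=> b; case: (eqVneq b x) => [-> | hbx].
      have -> : x :: Wm = mkseq (fun s => B2 (- Posz n + Posz s)%R) t.+2.
        apply: (eq_from_nth (x0 := false)); first by rewrite /Wm /wm /mkseq /= !size_map !size_iota.
        move=> -[|s] hs'; last have hs2 : s < t.+1 by move: hs'; rewrite /Wm /wm /mkseq /= size_map size_iota.
          rewrite nth_mkseq //; have := hpre 0; rewrite /= size_L; move=> h; rewrite -h //.
          congr B2; lia.
        rewrite -[nth false (x :: Wm) s.+1]/(nth false Wm s) /Wm /wm !nth_mkseq //.
        case: (leqP s.+1 n) => hsn.
          have := hpre s.+1; rewrite /= size_L ltnS hsn => /(_ isT) h.
          rewrite (_ : (- Posz n + Posz s.+1)%R = (Posz s.+1 - Posz n)%R); last by lia.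
          rewrite h hBk; last by lia.
          by rewrite nth_cat size_L hsn.
        rewrite (_ : (- Posz n + Posz s.+1)%R = Posz (s.+1 - n)); last by lia.
        by rewrite hy /B' (_ : (Posz s.+1 - Posz n)%R = Posz (s.+1 - n)) //; lia.
      exact: lang_Xt.
    have -> : b :: Wm = mkseq (fun s => B' (- Posz n + Posz s)%R) t.+2.
      apply: (eq_from_nth (x0 := false)); first by rewrite /Wm /wm /mkseq /= !size_map !size_iota.
      move=> -[|s] hs'; last have hs2 : s < t.+1 by move: hs'; rewrite /Wm /wm /mkseq /= size_map size_iota.
        rewrite nth_mkseq // /B' (_ : (- Posz n + Posz 0 + Posz n)%R = Posz 0); last by lia.
        clear hs'; rewrite hBX //; by case: eqP hbx; case: (b); case: (x).
      rewrite -[nth false (b :: Wm) s.+1]/(nth false Wm s) /Wm /wm !nth_mkseq //; congr B'; lia.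
    exact: lang_Xt.
  have := LS_uniq hs (W1 := Wm) (W2 := Lpref l t.+1); rewrite /Wm /wm size_mkseq size_L.
  move=> /(_ erefl hall (fun b => ls_any hl b t.+1)) e.
  by have := congr1 (fun q => nth false q t) e; rewrite !nth_mkseq.
apply: hV; apply: (eq_from_nth (x0 := false)); rewrite size_cat !size_L // => k hk.
by rewrite -hBk // claim nth_mkseq.
Qed.

Theorem lemma4p9 (u l : nat -> bool) (n : nat) (x : bool) :
  sturmian u -> left_special_seq u l -> 1 < n ->
  significant u (x :: Lpref l n.-1) ->
  HB_arrow u (x :: Lpref l n.-1) (x :: Lpref l n).
Proof.
move=> hs hl hn hsig; split => //.
have hsn : significant u (x :: Lpref l n) by apply: sig_xL => //; lia.
split => //; exists (l n.-1).
have e : rcons (x :: Lpref l n.-1) (l n.-1) = x :: Lpref l n.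
  by rewrite rcons_cons /Lpref -mkseqS prednK //; lia.
rewrite e; split; first exact: ls_any.
split => //; first by exists 0; split.
by move=> k _ _; rewrite size_drop leq_subr.
Qed.
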